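(* Let $\mathcal{L},\mathcal{L}'$ be intuitionistic abstract logics and $h:\mathcal{L}\to\mathcal{L}'$ a strongly stable logic map. Then $h$ is a morphism of the associated Heyting algebras: for all $a,b\in Expr_{\mathcal{L}}$, $h(a\wedge b)=h(a)\wedge' h(b)$, $h(a\vee b)=h(a)\vee' h(b)$ and $h(a\to b)=h(a)\to' h(b)$, where equality is equality in the Heyting algebra $(Expr_{\mathcal{L}'},\le')$ (i.e. mutual $\le'$).
   Context: An abstract logic is a triple $\mathcal{L}=(Expr_{\mathcal{L}},Th_{\mathcal{L}},\mathcal{C}_{\mathcal{L}})$ where $Expr_{\mathcal{L}}$ is a set, $Th_{\mathcal{L}}$ a non-empty set of subsets of $Expr_{\mathcal{L}}$ (theories) closed under intersections of non-empty subfamilies, and $\mathcal{C}_{\mathcal{L}}$ a set of operations on $Expr_{\mathcal{L}}$. $\mathcal{L}$ is closed under union of chains if the union of every non-empty chain of theories is a theory. A theory $T$ is prime if $T=\bigcap\mathcal{T}$ with $\mathcal{T}\subseteq Th_{\mathcal{L}}$ non-empty finite implies $T\in\mathcal{T}$; totally prime if this holds for non-empty $\mathcal{T}$ of any size. $PTh_{\mathcal{L}}$, $TPTh_{\mathcal{L}}$ denote these sets. An intuitionistic abstract logic is one closed under union of chains with binary connectives $\vee,\wedge,\to$ and constants $\top,\bot$ such that for all $a,b$ and all $T\in TPTh_{\mathcal{L}}$: $a\vee b\in T$ iff $a\in T$ or $b\in T$; $a\wedge b\in T$ iff $a,b\in T$; $a\to b\in T$ iff for every totally prime $T'\supseteq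 T$, $a\in T'$ implies $b\in T'$; $\top$ lies in every theory and $\bot$ in none. The associated Heyting algebra is $(Expr_{\mathcal{L}},\le)$ with $a\le b$ iff every prime theory containing $a$ contains $b$, and operations $\wedge,\vee,\to,\bot,\top$ (elements with $a\le b\le a$ identified). A logic map $h:\mathcal{L}\to\mathcal{L}'$ is a function $Expr_{\mathcal{L}}\to Expr_{\mathcal{L}'}$ with $h^{-1}(T')\in Th_{\mathcal{L}}$ for all $T'\in Th_{\mathcal{L}'}$; it is strongly stable if $h^{-1}(P')\in PTh_{\mathcal{L}}$ for all $P'\in PTh_{\mathcal{L}'}$ and whenever $P'\in PTh_{\mathcal{L}'}$, $P\in PTh_{\mathcal{L}}$ with $h^{-1}(P')\subseteq P$, there is $Q'\in PTh_{\mathcal{L}'}$ with $P'\subseteq Q'$ and $h^{-1}(Q')=P$. *)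

(* Defs.v *)
From Stdlib Require Import List.
Import ListNotations.
Set Implicit Arguments.

Definition set_eq {E : Type} (A B : E -> Prop) : Prop := forall x, A x <-> B x.
Definition subset {E : Type} (A B : E -> Prop) : Prop := forall x, A x -> B x.

Definition bigcap {E : Type} (F : (E -> Prop) -> Prop) : E -> Prop :=
  fun x => forall T, F T -> T x.
Definition bigcup {E : Type} (F : (E -> Prop) -> Prop) : E -> Prop :=
  fun x => exists T, F T /\ T x.

(* Abstract logic (Expr, Th, C); the operations C relevant here are the
   intuitionistic connectives, stored in [IntLogic] below. *)
Record AbsLogic := {
  Expr : Type;
  Th : (Expr -> Prop) -> Prop;
  Th_nonempty : exists T, Th T;
  Th_inter : forall F : (Expr -> Prop) -> Prop,
      (exists T, F T) -> (forall T, F T -> Th T) -> Th (bigcap F)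
}.

Definition is_chain {E : Type} (C : (E -> Prop) -> Prop) : Prop :=
  forall A B, C A -> C B -> subset A B \/ subset B A.

Definition closed_union_chains (L : AbsLogic) : Prop :=
  forall C : (Expr L -> Prop) -> Prop,
    (exists T, C T) -> (forall T, C T -> Th L T) -> is_chain C ->
    Th L (bigcup C).

Definition prime_th (L : AbsLogic) (T : Expr L -> Prop) : Prop :=
  Th L T /\
  forall l : list (Expr L -> Prop),
    l <> [] -> (forall T', In T' l -> Th L T') ->
    set_eq T (bigcap (fun T' => In T' l)) ->
    exists T', In T' l /\ set_eq T' T.

Definition tprime_th (L : AbsLogic) (T : Expr L -> Prop) : Prop :=
  Th L T /\
  forall F : (Expr L -> Prop) -> Prop,
    (exists T', F T') -> (forall T', F T' -> Th L T') ->
    set_eq T (bigcap F) ->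
    exists T', F T' /\ set_eq T' T.

Record IntLogic := {
  base :> AbsLogic;
  il_chains : closed_union_chains base;
  il_or : Expr base -> Expr base -> Expr base;
  il_and : Expr base -> Expr base -> Expr base;
  il_imp : Expr base -> Expr base -> Expr base;
  il_top : Expr base;
  il_bot : Expr base;
  il_or_spec : forall a b T, tprime_th base T ->
      (T (il_or a b) <-> T a \/ T b);
  il_and_spec : forall a b T, tprime_th base T ->
      (T (il_and a b) <-> T a /\ T b);
  il_imp_spec : forall a b T, tprime_th base T ->
      (T (il_imp a b) <->
       forall T', tprime_th base T' -> subset T T' -> T' a -> T' b);
  il_top_spec : forall T, Th base T -> T il_top;
  il_bot_spec : forall T, Th base T -> ~ T il_bot
}.

Definition hle (L : AbsLogic) (a b : Expr L) : Prop :=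
  forall P, prime_th L P -> P a -> P b.

Definition heq (L : AbsLogic) (a b : Expr L) : Prop := hle L a b /\ hle L b a.

Definition preim {L L' : AbsLogic} (h : Expr L -> Expr L') (T' : Expr L' -> Prop)
  : Expr L -> Prop := fun x => T' (h x).

Definition logic_map (L L' : AbsLogic) (h : Expr L -> Expr L') : Prop :=
  forall T', Th L' T' -> Th L (preim h T').

Definition strongly_stable (L L' : AbsLogic) (h : Expr L -> Expr L') : Prop :=
  (forall P', prime_th L' P' -> prime_th L (preim h P')) /\
  (forall P' P, prime_th L' P' -> prime_th L P -> subset (preim h P') P ->
     exists Q', prime_th L' Q' /\ subset P' Q' /\ set_eq (preim h Q') P).

(* Main.v *)
Require Import Defs.
From Stdlib Require Import List Classical ClassicalEpsilon FunctionalExtensionality PropExtensionality.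
Import ListNotations.

Lemma sub_ext {E : Type} (A B : E -> Prop) : subset A B -> subset B A -> A = B.
Proof. intros H1 H2. apply functional_extensionality; intro x.
  apply propositional_extensionality; split; auto. Qed.

Inductive tower {E : Type} (g : (E->Prop)->(E->Prop)) (T0 : E->Prop) : (E->Prop) -> Prop :=
| tw_base : tower g T0 T0
| tw_succ : forall U, tower g T0 U -> tower g T0 (g U)
| tw_lim : forall C, (exists U, C U) -> (forall U, C U -> tower g T0 U) -> is_chain C ->
    tower g T0 (bigcup C).

Definition extreme {E : Type} (g : (E->Prop)->(E->Prop)) T0 (c : E -> Prop) :=
  forall x, tower g T0 x -> subset x c -> subset c x \/ subset (g x) c.

Section Z.
Context {E : Type} (g : (E->Prop)->(E->Prop)) (T0 : E->Prop)
  (infl : forall U, tower g T0 U -> subset U (g U)).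

Lemma tw_T0 : forall U, tower g T0 U -> subset T0 U.
Proof.
  induction 1.
  - intros x Hx; auto.
  - intros x Hx; apply infl; auto.
  - destruct H as [U0 HU0]. intros x Hx. exists U0; split; auto. apply H1; auto.
Qed.

Lemma ext_lemma : forall c, tower g T0 c -> extreme g T0 c ->
  forall x, tower g T0 x -> subset x c \/ subset (g c) x.
Proof.
  intros c Hct Hc x Hx. induction Hx.
  - left; apply tw_T0; auto.
  - destruct IHHx as [H|H].
    + destruct (Hc U Hx H) as [H'|H'].
      * rewrite (sub_ext _ _ H H'). right; intros y Hy; auto.
      * left; auto.
    + right. intros y Hy. apply infl; auto.
  - destruct (classic (forall U, C U -> subset U c)) as [Hall|Hn].
    + left. intros y [U [HU Hy]]. apply (Hall U HU); auto.
    + apply not_all_ex_not in Hn. destruct Hn as [U HU].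
      apply imply_to_and in HU. destruct HU as [HU HnU].
      destruct (H1 U HU) as [H3|H3]; [contradiction|].
      right. intros y Hy. exists U; split; auto.
Qed.

Lemma all_ext : forall c, tower g T0 c -> extreme g T0 c.
Proof.
  induction 1.
  - intros x Hx Hsub. left. apply tw_T0; auto.
  - intros x Hx Hsub. destruct (ext_lemma U H IHtower x Hx) as [H1|H1].
    + destruct (IHtower x Hx H1) as [H'|H'].
      * rewrite (sub_ext _ _ H1 H'). right; intros y Hy; auto.
      * right. intros y Hy. apply infl; auto.
    + left; auto.
  - intros x Hx Hsub. destruct (classic (subset (bigcup C) x)) as [Hs|Hs]; [left; auto|].
    assert (exists y, bigcup C y /\ ~ x y) as [y [[c' [Hc' Hy]] Hny]].
    { apply NNPP; intro Hn. apply Hs. intros y Hy. apply NNPP; intro Hny.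
      apply Hn; exists y; auto. }
    destruct (ext_lemma c' (H0 c' Hc') (H1 c' Hc') x Hx) as [H3|H3].
    + destruct (H1 c' Hc' x Hx H3) as [H4|H4].
      * exfalso; auto.
      * right. intros z Hz. exists c'; split; auto.
    + exfalso. apply Hny. apply H3. apply infl; auto.
Qed.

Lemma tower_chain : is_chain (tower g T0).
Proof.
  intros A B HA HB. destruct (ext_lemma B HB (all_ext B HB) A HA) as [H|H].
  - left; auto.
  - right. intros y Hy. apply H. apply infl; auto.
Qed.

Lemma tower_fix : exists M, tower g T0 M /\ subset (g M) M.
Proof.
  exists (bigcup (tower g T0)). assert (HM : tower g T0 (bigcup (tower g T0))).
  { apply tw_lim. exists T0; constructor. auto. apply tower_chain. }
  split; auto. intros y Hy. exists (g (bigcup (tower g T0))). split; auto.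
  apply tw_succ; auto.
Qed.
End Z.

Lemma zorn {E : Type} (S : (E->Prop)->Prop) (T0 : E -> Prop) : S T0 ->
  (forall C, (exists U, C U) -> (forall U, C U -> S U) -> is_chain C -> S (bigcup C)) ->
  exists M, S M /\ subset T0 M /\ forall U, S U -> subset M U -> subset U M.
Proof.
  intros H0 Hch. apply NNPP; intro Hno.
  assert (Hg : forall U, exists V, (S U /\ subset T0 U) ->
     (S V /\ subset T0 V) /\ subset U V /\ ~ subset V U).
  { intro U. destruct (classic (S U /\ subset T0 U)) as [HU|HU].
    - apply NNPP; intro Hn. apply Hno. exists U. split; [tauto|split;[tauto|]].
      intros V HV HUV. apply NNPP; intro HVU. apply Hn. exists V. intros _.
      split; [split; auto|split; auto]. intros y Hy; apply HUV; apply (proj2 HU); auto.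
    - exists U; tauto. }
  destruct (exist (fun g : (E->Prop)->(E->Prop) => forall U, (S U /\ subset T0 U) ->
     (S (g U) /\ subset T0 (g U)) /\ subset U (g U) /\ ~ subset (g U) U)
     (fun U => proj1_sig (constructive_indefinite_description _ (Hg U)))
     (fun U => proj2_sig (constructive_indefinite_description _ (Hg U)))) as [g Hgs].
  assert (HtS : forall U, tower g T0 U -> S U /\ subset T0 U).
  { induction 1.
    - split; auto. intros y; auto.
    - apply Hgs; auto.
    - split. apply Hch; auto. intros; apply H2; auto.
      destruct H as [U0 HU0]. intros y Hy. exists U0; split; auto. apply (H2 U0 HU0); auto. }
  assert (infl : forall U, tower g T0 U -> subset U (g U)).
  { intros U HU. apply Hgs; auto. }
  destruct (tower_fix g T0 infl) as [M [HM HgM]].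
  apply (Hgs M (HtS M HM)); auto.
Qed.

Lemma sep (L : IntLogic) (P : Expr L -> Prop) x : Th L P -> ~ P x ->
  exists Q, tprime_th L Q /\ subset P Q /\ ~ Q x.
Proof.
  intros HP Hx.
  destruct (zorn (fun U => Th L U /\ ~ U x) P (conj HP Hx)) as [M [[HM HMx] [HPM Hmax]]].
  - intros C Hne Hall Hc. split.
    + apply (il_chains L); auto. intros; apply Hall; auto.
    + intros [U [HU HUx]]. exact (proj2 (Hall U HU) HUx).
  - exists M. split; [|split; auto]. split; auto. intros F Hne Hall Heq.
    apply NNPP; intro Hn. apply HMx. apply Heq. intros T HT.
    apply NNPP; intro HTx. apply Hn. exists T. split; auto.
    assert (HMT : subset M T) by (intros y Hy; exact (proj1 (Heq y) Hy T HT)).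
    assert (HTM : subset T M) by (apply Hmax; [split; auto|]; auto).
    intro y; split; auto.
Qed.

Lemma tprime_prime (L : AbsLogic) T : tprime_th L T -> prime_th L T.
Proof.
  intros [HT Hp]. split; auto. intros l Hl Hall Heq. apply Hp; auto.
  destruct l as [|e l]; [congruence| exists e; left; auto].
Qed.

Lemma and_th (L : IntLogic) P a b : Th L P -> (P (il_and L a b) <-> P a /\ P b).
Proof.
  intro HP. split.
  - intro H. split; apply NNPP; intro Hn;
    destruct (sep L P _ HP Hn) as [Q [HQ [HPQ HQx]]]; apply HQx;
    apply (il_and_spec L a b HQ); auto.
  - intros [Ha Hb]. apply NNPP; intro Hn.
    destruct (sep L P _ HP Hn) as [Q [HQ [HPQ HQx]]]; apply HQx.
    apply (il_and_spec L a b HQ); split; auto.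
Qed.

Lemma or_prime (L : IntLogic) P a b : prime_th L P -> (P (il_or L a b) <-> P a \/ P b).
Proof.
  intro HP0. pose proof (proj1 HP0) as HPth. split.
  - intro H. apply NNPP; intro Hn.
    assert (Ha : ~ P a) by tauto. assert (Hb : ~ P b) by tauto.
    destruct (sep L P _ HPth Ha) as [Qa [HQa [HPQa HQax]]].
    destruct (sep L P _ HPth Hb) as [Qb [HQb [HPQb HQbx]]].
    set (FA := fun Q => tprime_th L Q /\ subset P Q /\ Q a).
    set (FB := fun Q => tprime_th L Q /\ subset P Q /\ Q b).
    assert (ThA : Th L (bigcap FA)).
    { apply Th_inter. exists Qb. split; auto. split; auto.
      destruct (proj1 (il_or_spec L a b HQb) (HPQb _ H)); tauto.
      intros T [HT _]; exact (proj1 HT). }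
    assert (ThB : Th L (bigcap FB)).
    { apply Th_inter. exists Qa. split; auto. split; auto.
      destruct (proj1 (il_or_spec L a b HQa) (HPQa _ H)); tauto.
      intros T [HT _]; exact (proj1 HT). }
    destruct (proj2 HP0 [bigcap FA; bigcap FB]) as [T' [HIn Heq]].
    + discriminate.
    + intros T' [<-|[<-|[]]]; auto.
    + intro y; split.
      * intros Hy T' [<-|[<-|[]]]; intros Q [HQ [HPQ _]]; auto.
      * intro Hy. apply NNPP; intro Hny.
        destruct (sep L P y HPth Hny) as [Q [HQ [HPQ HQy]]]. apply HQy.
        destruct (proj1 (il_or_spec L a b HQ) (HPQ _ H)) as [H0|H0].
        -- apply (Hy (bigcap FA)); [left; auto | split; auto].
        -- apply (Hy (bigcap FB)); [right; left; auto | split; auto].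
    + destruct HIn as [<-|[<-|[]]].
      * apply Ha. apply (proj1 (Heq a)). intros Q [_ [_ HQ]]; auto.
      * apply Hb. apply (proj1 (Heq b)). intros Q [_ [_ HQ]]; auto.
  - intro H. apply NNPP; intro Hn.
    destruct (sep L P _ HPth Hn) as [Q [HQ [HPQ HQx]]]. apply HQx.
    apply il_or_spec; auto. destruct H; [left|right]; auto.
Qed.

Lemma imp_th (L : IntLogic) P a b : Th L P ->
  (P (il_imp L a b) <-> forall T', tprime_th L T' -> subset P T' -> T' a -> T' b).
Proof.
  intro HP. split.
  - intros H T' HT' HPT' Ha.
    apply (proj1 (il_imp_spec L a b HT') (HPT' _ H)); auto. intros y; auto.
  - intro H. apply NNPP; intro Hn.
    destruct (sep L P _ HP Hn) as [Q [HQ [HPQ HQx]]]. apply HQx.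
    apply il_imp_spec; auto. intros T' HT' HQT' Ha. apply H; auto.
    intros y Hy; auto.
Qed.

Lemma mp (L : IntLogic) P a b : Th L P -> P (il_imp L a b) -> P a -> P b.
Proof.
  intros HP Hab Ha. apply NNPP; intro Hn.
  destruct (sep L P _ HP Hn) as [Q [HQ [HPQ HQx]]]. apply HQx.
  exact (proj1 (imp_th L P a b HP) Hab Q HQ HPQ (HPQ _ Ha)).
Qed.

Theorem lemma4p6 (L L' : IntLogic) (h : Expr L -> Expr L') :
  logic_map L L' h -> strongly_stable L L' h ->
  forall a b : Expr L,
    heq L' (h (il_and L a b)) (il_and L' (h a) (h b)) /\
    heq L' (h (il_or L a b)) (il_or L' (h a) (h b)) /\
    heq L' (h (il_imp L a b)) (il_imp L' (h a) (h b)).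
Proof.
  intros _ [Hss1 Hss2] a b. unfold heq, hle.
  split; [|split]; split; intros P' HP' H;
    pose proof (Hss1 P' HP') as HPp; pose proof (proj1 HPp) as HPt.
  - apply (and_th L' P' _ _ (proj1 HP')).
    exact (proj1 (and_th L (preim h P') a b HPt) H).
  - apply (and_th L' P' _ _ (proj1 HP')) in H.
    exact (proj2 (and_th L (preim h P') a b HPt) H).
  - apply (or_prime L' P' _ _ HP').
    exact (proj1 (or_prime L (preim h P') a b HPp) H).
  - apply (or_prime L' P' _ _ HP') in H.
    exact (proj2 (or_prime L (preim h P') a b HPp) H).
  - apply (imp_th L' P' _ _ (proj1 HP')). intros T' HT' HPT' Ha.
    pose proof (Hss1 T' (tprime_prime _ _ HT')) as HTp.
    apply (mp L (preim h T') a b (proj1 HTp)); [apply HPT'; exact H | exact Ha].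
  - change (preim h P' (il_imp L a b)).
    apply (imp_th L (preim h P') a b HPt). intros T HT HPT Ha.
    destruct (Hss2 P' T HP' (tprime_prime _ _ HT) HPT) as [Q' [HQ' [HPQ' HeqQ]]].
    apply (proj1 (HeqQ b)). apply (proj2 (HeqQ a)) in Ha.
    apply (mp L' Q' (h a) (h b) (proj1 HQ')); auto.
Qed.
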